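(* Let $\sigma_t:\mathcal{M}_t\to\mathcal{P}_t$, $t=0,\dots,T+1$, be functions such that $\Pi_t=\sigma_t(M_t)$ is an information state at each $t=0,\dots,T$. Then for all $t=0,\dots,T$, all $m_t\in[[M_t]]$ and all $u_t\in[[U_t]]$, $$Q_t(m_t,u_t)=\bar{Q}_t\big(\sigma_t(m_t),u_t\big)\quad\text{and}\quad V_t(m_t)=\bar{V}_t\big(\sigma_t(m_t)\big).$$
   Context: Uncertain variables: fix a sample space $\Omega$; an uncertain variable with values in a set $\mathcal{X}$ is a map $X:\Omega\to\mathcal{X}$, with marginal range $[[X]]:=\{X(\omega):\omega\in\Omega\}$; uncertain variables are independent if their joint range is the product of their marginal ranges. System: horizon $T\in\mathbb{N}$. For $t=0,\dots,T$ there are independent disturbances $W_t\in\mathcal{W}_t$, actions $U_t\in\mathcal{U}_t$ taking values in a given set $[[U_t]]\subseteq\mathcal{U}_t$, observations $Y_0=h_0(W_0)$, $Y_{t+1}=h_{t+1}(W_{0:t},U_{0:t})$, and costs $C_t=d_t(W_{0:t},U_{0:t})\in\mathcal{C}_t\subset\mathbb{R}_{\ge0}$. The sets $\mathcal{U}_t,\mathcal{W}_t,\mathcal{Y}_t$ are bounded subsets of a metric space $(\mathcal{S},\eta)$, the $\mathcal{C}_t$ are bounded subsets of $\mathbb{R}_{\ge 0}$, the $h_t$ are Lipschitz and $L$-invertible, and the $d_t$ are Lipschitz. The memory is $M_t=(Y_{0:t},U_{0:t-1})\in\mathcal{M}_t:=\prod_{\ell=0}^t\mathcal{Y}_\ell\times\prod_{\ell=0}^{t-1}\mathcal{U}_\ell$.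 Strategy-independent ranges: for $m_t=(y_{0:t},u_{0:t-1})$ let $\mathcal{W}(m_t)$ be the set of $w_{0:t}\in\prod_{\ell=0}^t[[W_\ell]]$ with $y_0=h_0(w_0)$ and $y_\ell=h_\ell(w_{0:\ell-1},u_{0:\ell-1})$ for $\ell=1,\dots,t$. Let $[[M_t]]$ be the set of such $m_t$ with $u_\ell\in[[U_\ell]]$ and $\mathcal{W}(m_t)\neq\emptyset$. For $m_t\in[[M_t]]$, $u_t\in[[U_t]]$: $[[C_t|m_t,u_t]]:=\{d_t(w_{0:t},u_{0:t}):w_{0:t}\in\mathcal{W}(m_t)\}$, $[[Y_{t+1}|m_t,u_t]]:=\{h_{t+1}(w_{0:t},u_{0:t}):w_{0:t}\in\mathcal{W}(m_t)\}$, $[[M_{t+1}|m_t,u_t]]:=\{(m_t,u_t,y_{t+1}):y_{t+1}\in[[Y_{t+1}|m_t,u_t]]\}$ (with the components rearranged as a memory). For functions $\sigma_t$ on $\mathcal{M}_t$ and $\Pi_t=\sigma_t(M_t)$: $[[\Pi_t]]:=\sigma_t([[M_t]])$, $[[M_t|\pi_t]]:=\{m_t\in[[M_t]]:\sigma_t(m_t)=\pi_t\}$, $[[\Pi_{t+1}|m_t,u_t]]:=\{\sigma_{t+1}(m_{t+1}):m_{t+1}\in[[M_{t+1}|m_t,u_t]]\}$, and for $Z\in\{C_t,Y_{t+1},\Pi_{t+1}\}$, $[[Z|\pi_t,u_t]]:=\bigcup_{m_t\in[[M_t|\pi_t]]}[[Z|m_t,u_t]]$. Memory-based DP: $V_{T+1}\equiv0$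 and for $t=T,\dots,0$, $Q_t(m_t,u_t):=\max\{\sup_{c\in[[C_t|m_t,u_t]]}c,\ \sup_{m_{t+1}\in[[M_{t+1}|m_t,u_t]]}V_{t+1}(m_{t+1})\}$, $V_t(m_t):=\inf_{u_t\in[[U_t]]}Q_t(m_t,u_t)$. Information state: $\Pi_t=\sigma_t(M_t)$ with $\sigma_t:\mathcal{M}_t\to\mathcal{P}_t$, $\mathcal{P}_t$ bounded, such that for all $t=0,\dots,T$, $m_t\in[[M_t]]$, $u_t\in[[U_t]]$: (i) $\sup_{c\in[[C_t|m_t,u_t]]}c=\sup_{c\in[[C_t|\sigma_t(m_t),u_t]]}c$; (ii) $[[\Pi_{t+1}|m_t,u_t]]=[[\Pi_{t+1}|\sigma_t(m_t),u_t]]$. Information-state DP: $\bar V_{T+1}\equiv0$ and for $\pi_t\in[[\Pi_t]]$, $u_t\in[[U_t]]$: $\bar Q_t(\pi_t,u_t):=\max\{\sup_{c\in[[C_t|\pi_t,u_t]]}c,\ \sup_{\pi_{t+1}\in[[\Pi_{t+1}|\pi_t,u_t]]}\bar V_{t+1}(\pi_{t+1})\}$, $\bar V_t(\pi_t):=\inf_{u_t\in[[U_t]]}\bar Q_t(\pi_t,u_t)$. *)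

(* Defs.v *)
From HB Require Import structures.
From mathcomp Require Import all_boot all_order all_algebra.
From mathcomp Require Import boolp classical_sets reals constructive_ereal ereal.
Set Implicit Arguments. Unset Strict Implicit. Unset Printing Implicit Defensive.
Import Order.TTheory GRing.Theory Num.Theory.
Local Open Scope classical_set_scope.
Local Open Scope ring_scope.
Local Open Scope ereal_scope.

(* Worst-case (uncertain-variable) partially observed system, described through
   the ranges of its primitive uncertain variables.
   - S      : the ambient space containing all U_t, W_t, Y_t.
   - Wr t   : [[W_t]]  (the W_t are independent, so the joint range of
              W_{0:t} is the product of the Wr l, l <= t).
   - Ur t   : [[U_t]].
   - h0     : observation map Y_0 = h0 W_0.
   - h l    : for l >= 1, Y_l = h l (w_{0:l-1}) (u_{0:l-1}); sequences are
              represented as [seq S] listing entries 0,1,...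
   - d t    : cost C_t = d t (w_{0:t}) (u_{0:t}).
   A memory m_t = (y_{0:t}, u_{0:t-1}) is the pair (m.1, m.2) of sequences
   of sizes t+1 and t. *)

Section System.
Variables (R : realType) (S : pointedType).
Variables (Wr Ur : nat -> set S) (h0 : S -> S) (h : nat -> seq S -> seq S -> S)
          (d : nat -> seq S -> seq S -> R).

Definition memory := (seq S * seq S)%type.

Definition Wm (t : nat) (m : memory) : set (seq S) :=
  [set ws | size ws = t.+1 /\
            (forall l, (l < t.+1)%N -> Wr l (nth point ws l)) /\
            nth point m.1 0 = h0 (nth point ws 0) /\
            (forall l, (0 < l)%N -> (l <= t)%N ->
               nth point m.1 l = h l (take l ws) (take l m.2))].

Definition Mrange (t : nat) : set memory :=
  [set m | size m.1 = t.+1 /\ size m.2 = t /\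
           (forall l, (l < t)%N -> Ur l (nth point m.2 l)) /\
           Wm t m !=set0].

Definition Ccond (t : nat) (m : memory) (u : S) : set R :=
  [set d t ws (rcons m.2 u) | ws in Wm t m].

Definition Ycond (t : nat) (m : memory) (u : S) : set S :=
  [set h t.+1 ws (rcons m.2 u) | ws in Wm t m].

Definition Mnext (t : nat) (m : memory) (u : S) : set memory :=
  [set (rcons m.1 y, rcons m.2 u) | y in Ycond t m u].

Definition esup (A : set R) : \bar R := ereal_sup [set x%:E | x in A].

(* Memory-based DP.  Vmem k t = V_t when k = T+1-t steps remain; Vmem 0 = V_{T+1} = 0. *)
Fixpoint Vmem (k t : nat) (m : memory) : \bar R :=
  match k with
  | 0 => 0
  | k'.+1 =>
      ereal_inf [set maxe (esup (Ccond t m u))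
                          (ereal_sup [set Vmem k' t.+1 m' | m' in Mnext t m u])
                | u in Ur t]
  end.

Definition V (T t : nat) (m : memory) : \bar R := Vmem (T.+1 - t) t m.

Definition Q (T t : nat) (m : memory) (u : S) : \bar R :=
  maxe (esup (Ccond t m u))
       (ereal_sup [set V T t.+1 m' | m' in Mnext t m u]).

Variables (P : Type) (sigma : nat -> memory -> P).

Definition Pirange (t : nat) : set P := sigma t @` Mrange t.
Definition Mof (t : nat) (p : P) : set memory :=
  [set m | Mrange t m /\ sigma t m = p].
Definition PiNext_m (t : nat) (m : memory) (u : S) : set P :=
  [set sigma t.+1 m' | m' in Mnext t m u].
Definition Ccond_pi (t : nat) (p : P) (u : S) : set R :=
  \bigcup_(m in Mof t p) Ccond t m u.
Definition PiNext_pi (t : nat) (p : P) (u : S) : set P :=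
  \bigcup_(m in Mof t p) PiNext_m t m u.

Definition is_info_state_at (t : nat) : Prop :=
  forall m u, Mrange t m -> Ur t u ->
    esup (Ccond t m u) = esup (Ccond_pi t (sigma t m) u) /\
    PiNext_m t m u = PiNext_pi t (sigma t m) u.

(* Information-state DP (values outside [[Pi_t]] are never used). *)
Fixpoint Vbarmem (k t : nat) (p : P) : \bar R :=
  match k with
  | 0 => 0
  | k'.+1 =>
      ereal_inf [set maxe (esup (Ccond_pi t p u))
                          (ereal_sup [set Vbarmem k' t.+1 p' | p' in PiNext_pi t p u])
                | u in Ur t]
  end.

Definition Vbar (T t : nat) (p : P) : \bar R := Vbarmem (T.+1 - t) t p.

Definition Qbar (T t : nat) (p : P) (u : S) : \bar R :=
  maxe (esup (Ccond_pi t p u))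
       (ereal_sup [set Vbar T t.+1 p' | p' in PiNext_pi t p u]).

End System.

(* Main.v *)
Require Import Defs.
From HB Require Import structures.
From mathcomp Require Import all_boot all_order all_algebra.
From mathcomp Require Import boolp classical_sets reals constructive_ereal ereal.

Theorem theorem1 (R : realType) (S : pointedType)
  (Wr Ur : nat -> set S) (h0 : S -> S) (h : nat -> seq S -> seq S -> S)
  (d : nat -> seq S -> seq S -> R) (T : nat)
  (P : Type) (sigma : nat -> memory S -> P) :
  (forall t, (t <= T)%N -> is_info_state_at Wr Ur h0 h d sigma t) ->
  forall t, (t <= T)%N ->
  forall (m : memory S) (u : S), Mrange Wr Ur h0 h t m -> Ur t u ->
    Q Wr Ur h0 h d T t m u = Qbar Wr Ur h0 h d sigma T t (sigma t m) u /\
    V Wr Ur h0 h d T t m = Vbar Wr Ur h0 h d sigma T t (sigma t m).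
Proof.
move=> Hinfo.
have Vunf : forall t m, (t <= T)%N -> V Wr Ur h0 h d T t m =
    ereal_inf [set Q Wr Ur h0 h d T t m u | u in Ur t].
  by move=> t m tT; rewrite /V subSn.
have Vbunf : forall t p, (t <= T)%N -> Vbar Wr Ur h0 h d sigma T t p =
    ereal_inf [set Qbar Wr Ur h0 h d sigma T t p u | u in Ur t].
  by move=> t p tT; rewrite /Vbar subSn.
have Mnext_rng : forall t m u m' w, Mrange Wr Ur h0 h t m -> Ur t u -> Wr t.+1 w ->
    Mnext Wr h0 h t m u m' -> Mrange Wr Ur h0 h t.+1 m'.
  move=> t m u m' w [s1 [s2 [HU _]]] Hu Hw [y [ws Hws <-] <-] /=.
  have [sw [HW [H0 Hl]]] := Hws.
  split; first by rewrite size_rcons s1.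
  split; first by rewrite size_rcons s2.
  split.
    move=> l lt; rewrite nth_rcons s2.
    case: ltnP => [lt'|ge]; first exact: HU.
    have -> : l = t by apply/eqP; rewrite eqn_leq ge -ltnS lt.
    by rewrite eqxx.
  exists (rcons ws w); split; first by rewrite size_rcons sw.
  split.
    move=> l lt; rewrite nth_rcons sw.
    case: ltnP => [lt'|ge]; first exact: HW.
    have -> : l = t.+1 by apply/eqP; rewrite eqn_leq ge -ltnS lt.
    by rewrite eqxx.
  split; first by rewrite !nth_rcons s1 sw /=.
  move=> l l0 lt; rewrite nth_rcons s1 -!cats1.
  case: ltnP => [lt'|ge].
    rewrite !takel_cat ?sw ?s2 //; try solve [exact: lt' | exact: ltnW lt'].
    by apply: Hl.
  have -> : l = t.+1 by apply/eqP; rewrite eqn_leq ge lt.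
  rewrite eqxx takel_cat; last by rewrite sw.
  have -> : take t.+1 ws = ws by rewrite -sw take_size.
  rewrite /= take_oversize //.
  by rewrite size_cat s2 addn1.
have Wm0 : forall t m, ~ (exists w, Wr t.+1 w) -> Wm Wr h0 h t.+1 m = set0.
  move=> t m nW; apply/seteqP; split => // ws [_ [HW _]].
  by apply: nW; exists (nth point ws t.+1); apply: HW.
have Mof0 : forall t p, ~ (exists w, Wr t.+1 w) -> Mof Wr Ur h0 h sigma t.+1 p = set0.
  move=> t p nW; apply/seteqP; split => // m [[_ [_ [_ Hne]]] _].
  by move: Hne; rewrite (Wm0 _ _ nW) => -[].
have Qempty : forall t m p u, ~ (exists w, Wr t.+1 w) ->
    Q Wr Ur h0 h d T t.+1 m u = Qbar Wr Ur h0 h d sigma T t.+1 p u.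
  move=> t m p u nW.
  rewrite /Q /Qbar /Mnext /Ycond /Ccond /Ccond_pi /PiNext_pi (Wm0 t m nW) (Mof0 t p nW).
  by rewrite !image_set0 !bigcup_set0 !image_set0.
have main : forall k t, (t + k = T)%N -> forall m, Mrange Wr Ur h0 h t m ->
   (forall u, Ur t u -> Q Wr Ur h0 h d T t m u = Qbar Wr Ur h0 h d sigma T t (sigma t m) u) /\
   V Wr Ur h0 h d T t m = Vbar Wr Ur h0 h d sigma T t (sigma t m).
  elim=> [|k IH] t tk m Hm.
  - have tT : (t <= T)%N by rewrite -tk addn0.
    have HQ : forall u, Ur t u -> Q Wr Ur h0 h d T t m u =
                Qbar Wr Ur h0 h d sigma T t (sigma t m) u.
      move=> u Hu; have [Hc Hp] := Hinfo t tT m u Hm Hu.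
      rewrite /Q /Qbar -Hc -Hp /PiNext_m image_comp; congr maxe; congr ereal_sup.
      apply: eq_imagel => m' _ /=.
      by rewrite /V /Vbar -tk addn0 subnn.
    split => //; rewrite Vunf // Vbunf //; congr ereal_inf; exact: eq_imagel.
  - have tT : (t <= T)%N by rewrite -tk leq_addr.
    have HQ : forall u, Ur t u -> Q Wr Ur h0 h d T t m u =
                Qbar Wr Ur h0 h d sigma T t (sigma t m) u.
      move=> u Hu; have [Hc Hp] := Hinfo t tT m u Hm Hu.
      rewrite /Q /Qbar -Hc -Hp /PiNext_m image_comp; congr maxe; congr ereal_sup.
      apply: eq_imagel => m' Hm' /=.
      have t1T : (t.+1 <= T)%N by rewrite -tk addnS ltnS leq_addr.
      case: (pselect (exists w, Wr t.+1 w)) => [[w Hw]|nW].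
        have := IH t.+1 _ m' (Mnext_rng _ _ _ _ _ Hm Hu Hw Hm').
        by rewrite addSnnS => /(_ tk) [].
      rewrite Vunf // Vbunf //; congr ereal_inf; apply: eq_imagel => u' _.
      exact: Qempty.
    split => //; rewrite Vunf // Vbunf //; congr ereal_inf; exact: eq_imagel.
move=> t tT m u Hm Hu.
have [HQ HV] := main (T - t)%N t (subnKC tT) m Hm.
by split => //; apply: HQ.
Qed.
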